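(* For all integers $d\ge 4$ and $\ell\ge 4$, the diameter of $CK(d,\ell)$ is at most $2\ell-2$.
   Context: Let $\Sigma=\{0,1,\dots,d\}$. The cyclic Kautz digraph $CK(d,\ell)$ has as vertices all sequences $a_1\ldots a_\ell\in\Sigma^\ell$ with $a_i\neq a_{i+1}$ for $1\le i\le \ell-1$ and $a_1\neq a_\ell$, with an arc from $a_1\ldots a_\ell$ to $b_1\ldots b_\ell$ iff both are vertices and $b_i=a_{i+1}$ for $1\le i\le\ell-1$. The diameter is the maximum over ordered pairs of vertices of the directed distance. *)

(* Defs.v *)
From mathcomp Require Import all_boot.
Unset Printing Implicit Defensive.

(* Alphabet Sigma = {0,...,d} is the ordinal type 'I_d.+1.
   Words a_1 ... a_l are sequences; position i (1-based) is nth ord0 a (i-1). *)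

Definition ck_vertex (d l : nat) (a : seq 'I_d.+1) : Prop :=
  size a = l /\
  (forall i, i.+1 < l -> nth ord0 a i != nth ord0 a i.+1) /\
  nth ord0 a 0 != nth ord0 a l.-1.

Definition ck_arc (d l : nat) (a b : seq 'I_d.+1) : Prop :=
  ck_vertex d l a /\ ck_vertex d l b /\
  (forall i, i < l.-1 -> nth ord0 b i = nth ord0 a i.+1).

Inductive ck_walk (d l : nat) : nat -> seq 'I_d.+1 -> seq 'I_d.+1 -> Prop :=
  | ck_walk0 a : ck_vertex d l a -> ck_walk d l 0 a a
  | ck_walkS n a b c : ck_arc d l a b -> ck_walk d l n b c -> ck_walk d l n.+1 a c.

Definition ck_dist_le (d l : nat) (u v : seq 'I_d.+1) (k : nat) : Prop :=
  exists2 n, n <= k & ck_walk d l n u v.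

Definition ck_diam_le (d l k : nat) : Prop :=
  forall u v, ck_vertex d l u -> ck_vertex d l v -> ck_dist_le d l u v k.

(* Main.v *)
Require Import Defs.
From mathcomp Require Import all_boot.
From mathcomp Require Import zify.

Definition win (d l : nat) (f : nat -> 'I_d.+1) (i : nat) : seq 'I_d.+1 :=
  mkseq (fun j => f (i + j)) l.

Lemma vertex_win d l f i : 0 < l ->
  (forall j, j.+1 < l -> f (i + j) != f (i + j.+1)) ->
  f i != f (i + l.-1) -> ck_vertex d l (win d l f i).
Proof.
move=> l0 Hc Hw; split; first by rewrite size_mkseq.
split.
  move=> j hj; rewrite !nth_mkseq; [exact: Hc | lia | lia].
rewrite !nth_mkseq; [by rewrite addn0 | lia | lia].
Qed.

Lemma walk_win d l n : forall f,
  (forall i, i <= n -> ck_vertex d l (win d l f i)) ->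
  ck_walk d l n (win d l f 0) (win d l f n).
Proof.
elim: n => [|n IH] f H; first by apply: ck_walk0; apply: H.
apply: (@ck_walkS d l n _ (win d l f 1)).
  split; first exact: H.
  split; first exact: H.
  move=> i hi; rewrite !nth_mkseq; [by [] | lia | lia].
have := IH (fun k => f k.+1).
have E : forall i, win d l (fun k => f k.+1) i = win d l f i.+1.
  move=> i; apply: eq_mkseq => j /=; by rewrite addSn.
rewrite !E; apply => i hi; rewrite E; apply: H; lia.
Qed.

Definition avoid d (a b c e : 'I_d.+1) : 'I_d.+1 :=
  odflt ord0 [pick x | x \notin [:: a; b; c; e]].
Arguments avoid {d}.

Lemma avoidP d a b c e : 4 <= d ->
  let x := @avoid d a b c e in [/\ x != a, x != b, x != c & x != e].
Proof.
move=> hd /=; rewrite /avoid; case: pickP => [x /= Hx|H].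
  by move: Hx; rewrite !inE !negb_or => /and4P.
exfalso.
have : #|'I_d.+1| <= #|[:: a; b; c; e]|.
  apply: subset_leq_card; apply/subsetP => x _.
  by move: (H x) => /= /negbFE.
rewrite card_ord => h; have := leq_trans h (card_size _); simpl; lia.
Qed.
Arguments avoidP {d}.

Section Constr.
Variables (d l n : nat) (u v : seq 'I_d.+1).

Fixpoint g (k : nat) : 'I_d.+1 :=
  match k with
  | 0 => nth ord0 u 0
  | k'.+1 => if k < l then nth ord0 u k else if k < n then
      @avoid d (g k') (nth ord0 u (k - l + 1)) (nth ord0 v (k + l - 1 - n)) (nth ord0 v 0)
      else nth ord0 v (k - n)
  end.

Hypothesis hl : 4 <= l.
Hypothesis hd : 4 <= d.
Hypothesis hn : l < n.

Lemma gU k : k < l -> g k = nth ord0 u k.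
Proof. by case: k => //= k ->. Qed.

Lemma gV k : n <= k -> g k = nth ord0 v (k - n).
Proof.
case: k => [|k] hk; first lia.
rewrite /=; have -> : (k.+1 < l) = false by lia.
by have -> : (k.+1 < n) = false by lia.
Qed.

Lemma gM k : l <= k -> k < n -> g k =
  avoid (g k.-1) (nth ord0 u (k - l + 1)) (nth ord0 v (k + l - 1 - n)) (nth ord0 v 0).
Proof.
case: k => [|k] h1 h2; first lia.
rewrite /=; have -> : (k.+1 < l) = false by lia.
by rewrite h2.
Qed.

Hypothesis Hu : ck_vertex d l u.
Hypothesis Hv : ck_vertex d l v.
Hypothesis nle : n <= 2 * l - 2.
Hypothesis H : forall i, n - l + 1 <= i -> i < l ->
  nth ord0 u i != nth ord0 v (i + l - 1 - n).

Lemma gcons k : k.+1 < n + l -> g k != g k.+1.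
Proof.
move=> hk; case: Hu => su [cu wu]; case: Hv => sv [cv wv].
case: (ltnP k.+1 l) => h1.
  rewrite !gU //; [exact: cu | lia].
case: (leqP n k) => h2.
  rewrite !gV; [|lia|lia]; rewrite subSn //; apply: cv; lia.
case: (ltnP k l) => h3.
  have ek : k.+1 = l by lia.
  rewrite (@gM (k.+1)); [|lia|lia]; rewrite /=.
  by case: (avoidP (g k) (nth ord0 u (k.+1 - l + 1)) (nth ord0 v (k.+1 + l - 1 - n)) (nth ord0 v 0) hd) => a _ _ _; rewrite eq_sym.
case: (ltnP k.+1 n) => h4.
  rewrite (@gM (k.+1)); [|lia|lia]; rewrite /=.
  by case: (avoidP (g k) (nth ord0 u (k.+1 - l + 1)) (nth ord0 v (k.+1 + l - 1 - n)) (nth ord0 v 0) hd) => a _ _ _; rewrite eq_sym.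
have ek : k.+1 = n by lia.
rewrite (@gV (k.+1)); last lia.
rewrite (@gM (k)); [|lia|lia].
case: (avoidP (g k.-1) (nth ord0 u (k - l + 1)) (nth ord0 v (k + l - 1 - n)) (nth ord0 v 0) hd) => _ _ _ a.
by have -> : k.+1 - n = 0 by lia.
Qed.

Lemma gwin i : i <= n -> g i != g (i + l.-1).
Proof.
move=> hi; case: Hu => su [cu wu]; case: Hv => sv [cv wv].
case: (posnP i) => [->|i0].
  rewrite add0n !gU //; lia.
case: (ltnP (i + l.-1) n) => h1.
  have il : i < l by lia.
  rewrite (@gM (i + l.-1)); [|lia|lia].
  case: (avoidP (g (i + l.-1).-1) (nth ord0 u (i + l.-1 - l + 1)) (nth ord0 v (i + l.-1 + l - 1 - n)) (nth ord0 v 0) hd) => _ a _ _.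
  move: a; have -> : i + l.-1 - l + 1 = i by lia.
  by move=> a; rewrite gU // eq_sym.
rewrite (@gV (i + l.-1)) //.
case: (ltnP i l) => h2.
  rewrite gU //; have := @H i; have -> : i + l - 1 - n = i + l.-1 - n by lia.
  apply; lia.
case: (ltnP i n) => h3.
  rewrite gM //.
  case: (avoidP (g i.-1) (nth ord0 u (i - l + 1)) (nth ord0 v (i + l - 1 - n)) (nth ord0 v 0) hd) => _ _ a _.
  by have <- : i + l - 1 - n = i + l.-1 - n by lia.
have ei : i = n by lia.
rewrite ei gV // subnn.
have -> : n + l.-1 - n = l.-1 by lia.
by [].
Qed.

Lemma walk_g : ck_walk d l n u v.
Proof.
case: Hu => su _; case: Hv => sv _.
have E0 : win d l g 0 = u.
  apply: (eq_from_nth (x0:=ord0)); first by rewrite size_mkseq su.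
  move=> j; rewrite size_mkseq => h; rewrite nth_mkseq //= gU //.
have En : win d l g n = v.
  apply: (eq_from_nth (x0:=ord0)); first by rewrite size_mkseq sv.
  move=> j; rewrite size_mkseq => h; rewrite nth_mkseq // gV ?leq_addr // addKn //.
suff: ck_walk d l n (win d l g 0) (win d l g n) by rewrite E0 En.
apply: walk_win => i hi.
apply: vertex_win; first lia.
  move=> j hj; rewrite addnS; apply: gcons; lia.
exact: gwin.
Qed.

End Constr.

Theorem lemma8 (d l : nat) (hd : 4 <= d) (hl : 4 <= l) :
  ck_diam_le d l (2 * l - 2).
Proof.
move=> u v Hu Hv.
have Hu' := Hu; have Hv' := Hv.
case: Hu' => su [cu wu]; case: Hv' => sv [cv wv].
case: (eqVneq (nth ord0 u l.-1) (nth ord0 v 0)) => E.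
  exists (2 * l - 3); first lia.
  apply: walk_g => //; try lia.
  move=> i h1 h2.
  have [->|->] : i = l - 2 \/ i = l - 1 by lia.
    have -> : l - 2 + l - 1 - (2 * l - 3) = 0 by lia.
    rewrite -E; have := cu (l - 2); have -> : (l - 2).+1 = l.-1 by lia.
    apply; lia.
  have -> : l - 1 + l - 1 - (2 * l - 3) = 1 by lia.
  have -> : l - 1 = l.-1 by lia.
  rewrite E; apply: cv; lia.
exists (2 * l - 2); first lia.
apply: walk_g => //; try lia.
move=> i h1 h2.
have -> : i = l.-1 by lia.
have -> : l.-1 + l - 1 - (2 * l - 2) = 0 by lia.
exact: E.
Qed.
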